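(* Let $I$ be a monomial ideal of $R=K[x_1,\ldots,x_d]$ ($K$ a field) and $r\in\mathbb{R}$, $r\ge 0$. Consider the following procedure (the Staircase algorithm). If $d=1$, output $\{x_1^{\min(\mathcal{V},1)}\}$. If $d\ge2$, initialize an empty output list and let StartPoints be the set of lattice points $\mathbf{a}\in\operatorname{hype}(I,r)\cap\mathbb{Z}^d$ with $a_{d-1}=\min(\mathcal{V},d-1)$ and $a_d=\max(\mathcal{V},d)$. For each $\mathbf{a}\in$ StartPoints: set $\mathbf{b}:=\mathbf{a}$; while $\mathbf{a}\in\operatorname{hype}(I,r)$, do the following: if $\mathbf{a}\in r\cdot NP(I)$, set $\mathbf{b}:=\mathbf{a}$ and then $\mathbf{a}:=\mathbf{a}-\mathbf{e}_d$; otherwise, if $\mathbf{b}\in r\cdot NP(I)$ append $\mathbf{x}^{\mathbf{b}}$ to the output, then set $\mathbf{b}:=\mathbf{a}$ and $\mathbf{a}:=\mathbf{a}+\mathbf{e}_{d-1}$. After the while loop ends, if $\mathbf{b}\in r\cdot NP(I)$ append $\mathbf{x}^{\mathbf{b}}$ to the output. Finally return the output list. If $d\in\{1,2\}$, this procedure returns a minimal set of monomial generators of $\overline{I^r}$. If $d\ge3$, it returns a (not necessarily minimal) set of monomial generators of $\overline{I^r}$.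
   Context: $\mathbb{N}$ denotes the non-negative integers, $\mathbf{x}^{\mathbf{a}}=x_1^{a_1}\cdots x_d^{a_d}$, and $\mathbf{e}_i$ is the $i$-th standard basis vector. $G(I)$ is the minimal monomial generating set of $I$. $NP(I)$ is the convex hull in $\mathbb{R}^d$ of $\{\mathbf{a}\in\mathbb{N}^d\mid \mathbf{x}^{\mathbf{a}}\in I\}$, and $r\cdot NP(I)=\{r\mathbf{v}\mid\mathbf{v}\in NP(I)\}$. For real $r\ge0$, $\overline{I^r}=(\{\mathbf{x}^{\mathbf{a}}\mid \mathbf{a}\in r\cdot NP(I)\cap\mathbb{N}^d\})$. Let $\mathcal{V}(I,r)=\{(\lceil ra_1\rceil,\ldots,\lceil ra_d\rceil)\mid \mathbf{x}^{\mathbf{a}}\in G(I)\}$, and for $1\le i\le d$ let $\min(\mathcal{V},i)=\min_{\alpha\in\mathcal{V}(I,r)}\alpha_i$, $\max(\mathcal{V},i)=\max_{\alpha\in\mathcal{V}(I,r)}\alpha_i$. The hyperrectangle is $\operatorname{hype}(I,r)=\prod_{i=1}^d[\min(\mathcal{V},i),\max(\mathcal{V},i)]$. *)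

(* Defs.v *)
From HB Require Import structures.
From mathcomp Require Import all_boot all_order all_algebra.
From mathcomp Require Import boolp reals.
Set Implicit Arguments. Unset Strict Implicit. Unset Printing Implicit Defensive.
Import Order.TTheory GRing.Theory Num.Theory.
Local Open Scope ring_scope.

(* Exponent vectors a in N^d  (x^a = x_1^{a_1} ... x_d^{a_d}). *)
Notation expv d := {ffun 'I_d -> nat} (only parsing).
Notation ipt d := {ffun 'I_d -> int} (only parsing).

Section Staircase.
Variables (R : realType) (d : nat).
Local Notation expv := (expv d).
Local Notation ipt := (ipt d).

Definition divides (a b : expv) : bool := [forall i, (a i <= b i)%N].

(* A monomial ideal I is given by a finite set g of monomial generators
   (every monomial ideal is finitely generated).  Its set of exponents: *)
Definition in_ideal (g : seq expv) (a : expv) : bool := has (fun b => divides b a) g.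

Definition mingens (g : seq expv) : seq expv :=
  undup [seq a <- g | ~~ has (fun b => divides b a && (b != a)) g].

(* Newton polyhedron NP(I): convex hull in R^d of the exponents of I
   (finite convex combinations). *)
Definition in_NP (g : seq expv) (u : 'I_d -> R) : Prop :=
  exists s : seq (R * expv),
    [/\ all (fun p => in_ideal g p.2) s,
        all (fun p => 0 <= p.1) s,
        \sum_(p <- s) p.1 = 1 &
        forall i, u i = \sum_(p <- s) p.1 * ((p.2 i)%:R)].

Definition in_rNP (g : seq expv) (r : R) (v : 'I_d -> R) : Prop :=
  exists u, in_NP g u /\ forall i, v i = r * u i.

(* exponents of the integral closure overline{I^r}: multiples of lattice
   points of r*NP(I) ∩ N^d *)
Definition in_intclos (g : seq expv) (r : R) (c : expv) : Prop :=
  exists a : expv, in_rNP g r (fun i => (a i)%:R) /\ divides a c.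

Definition generates (S : seq expv) (J : expv -> Prop) : Prop :=
  forall c, J c <-> has (fun s => divides s c) S.

Definition minimal_generates (S : seq expv) (J : expv -> Prop) : Prop :=
  generates S J /\ forall s, s \in S -> ~ generates [seq t <- S | t != s] J.

Variables (g : seq expv) (r : R).

Definition Vset : seq ipt :=
  [seq [ffun i => Num.ceil (r * ((a i)%:R))] | a : expv <- mingens g].

Definition minV (i : 'I_d) : int :=
  \big[Num.min/ (head 0 [seq (v : ipt) i | v <- Vset])]_(v <- (Vset : seq ipt)) v i.
Definition maxV (i : 'I_d) : int :=
  \big[Num.max/ (head 0 [seq (v : ipt) i | v <- Vset])]_(v <- (Vset : seq ipt)) v i.

Definition in_hype (a : ipt) : bool := [forall i, (minV i <= a i <= maxV i)].

Definition inrNPb (a : ipt) : bool := `[< in_rNP g r (fun i => (a i)%:~R) >].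

(* a + c * e_j, coordinates numbered from 0, so e_d is j = d.-1 and
   e_{d-1} is j = d.-2 *)
Definition shift (a : ipt) (j : nat) (c : int) : ipt :=
  [ffun i => if val i == j then a i + c else a i].

Definition toexp (a : ipt) : expv := [ffun i => absz (a i)].

Definition Bnd : nat := \max_(i < d) absz (maxV i).

Definition emit (b : ipt) : seq expv := if inrNPb b then [:: toexp b] else [::].

(* the while loop; [n] is fuel, always sufficient (see loop_fuel) since each
   iteration either decreases a_d or increases a_{d-1}, both confined to
   [0, Bnd] while a stays in hype *)
Fixpoint loop (n : nat) (a b : ipt) : seq expv :=
  match n with
  | 0 => emit b
  | n'.+1 =>
    if in_hype a then
      if inrNPb a then loop n' (shift a d.-1 (-1)) a
      else emit b ++ loop n' (shift a d.-2 1) a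
    else emit b
  end.

Definition loop_fuel : nat := 4 * (Bnd.+1).

Definition startpoints : seq ipt :=
  [seq a <- [seq [ffun i => ((f i : nat)%:Z)] | f : {ffun 'I_d -> 'I_(Bnd.+1)}]
     | [&& in_hype a,
           [forall i, (val i == d.-2)%N ==> (a i == minV i)] &
           [forall i, (val i == d.-1)%N ==> (a i == maxV i)]]].

Definition staircase : seq expv :=
  if d == 1%N then [:: [ffun i => absz (minV i)]]
  else flatten [seq loop loop_fuel a a | a <- startpoints].

End Staircase.

(* Main.v *)
Require Import Defs.
From HB Require Import structures.
From mathcomp Require Import all_boot all_order all_algebra.
From mathcomp Require Import boolp reals.
From mathcomp Require Import ring lra zify.
Import Order.TTheory GRing.Theory Num.Theory.
Local Open Scope ring_scope.
Set Implicit Arguments. Unset Strict Implicit.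

Definition sh d (m : nat) (i : 'I_d) (e : expv d) : expv d :=
  [ffun j => (e j + (if j == i then m else 0))%N].

Lemma ideal_up d (g : seq (expv d)) e e' :
  in_ideal g e -> divides e e' -> in_ideal g e'.
Proof.
move=> /hasP [b bg be] ee'; apply/hasP; exists b => //.
apply/forallP => k; apply: leq_trans (forallP be k) (forallP ee' k).
Qed.

Lemma NP_up (R : realType) d (g : seq (expv d)) (u : 'I_d -> R) i (t : R) :
  in_NP g u -> 0 <= t ->
  in_NP g (fun k => u k + (if k == i then t else 0)).
Proof.
move=> [s [Hid Hw Hs Hu]] t0.
set m := Num.truncn t.
have /andP[mle mlt] := truncn_itv t0.
set f := t - m%:R.
have f0 : 0 <= f by rewrite subr_ge0.
have f1 : 1 - f >= 0 by rewrite -natr1 in mlt; rewrite /f; lra.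
exists ([seq (p.1 * (1 - f), sh m i p.2) | p <- s] ++
        [seq (p.1 * f, sh m.+1 i p.2) | p <- s]); split.
- rewrite all_cat !all_map; apply/andP; split; apply/allP => p ps /=;
  apply: ideal_up (allP Hid p ps) _; apply/forallP => k; rewrite ffunE leq_addr //.
- rewrite all_cat !all_map; apply/andP; split; apply/allP => p ps /=;
  apply: mulr_ge0 => //; exact: (allP Hw p ps).
- rewrite big_cat !big_map /= -!mulr_suml Hs; ring.
- move=> k; rewrite big_cat !big_map /= -big_split /= Hu.
  have -> : (if k == i then t else 0) = \sum_(p <- s) p.1 * (if k == i then t else 0).
    by rewrite -mulr_suml Hs mul1r.
  rewrite -big_split /=; apply: eq_bigr => p _; rewrite !ffunE.
  case: (k == i); rewrite ?addn0 ?natrD /f -?natr1; ring.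
Qed.

Lemma wsum_pos (R : realType) (I : eqType) (s : seq I) (w y : I -> R) :
  (forall i, i \in s -> 0 <= w i) -> (forall i, i \in s -> 0 < y i) ->
  0 < \sum_(i <- s) w i -> 0 < \sum_(i <- s) w i * y i.
Proof.
elim: s => [|i s IH] Hw Hy; first by rewrite big_nil ltxx.
rewrite !big_cons => Hs.
have wi := Hw i (mem_head _ _); have yi := Hy i (mem_head _ _).
have Hw' : forall j, j \in s -> 0 <= w j by move=> j js; apply: Hw; rewrite inE js orbT.
have Hy' : forall j, j \in s -> 0 < y j by move=> j js; apply: Hy; rewrite inE js orbT.
have s0 : 0 <= \sum_(j <- s) w j * y j.
  by rewrite big_seq; apply: sumr_ge0 => j js; rewrite mulr_ge0 ?Hw' // ltW // Hy'.
have [wi0|] := ltP 0 (w i).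
  by apply: ltr_wpDr => //; rewrite mulr_gt0.
move=> wle; have wi0 : w i = 0 by apply/eqP; rewrite eq_le wle wi.
by move: Hs; rewrite wi0 mul0r !add0r; exact: IH.
Qed.

Lemma conv_gt (R : realType) (I : eqType) (s : seq I) (w x : I -> R) c :
  (forall i, i \in s -> 0 <= w i) -> (forall i, i \in s -> c < x i) ->
  \sum_(i <- s) w i = 1 -> c < \sum_(i <- s) w i * x i.
Proof.
move=> Hw Hx Hs; rewrite -subr_gt0.
have -> : \sum_(i <- s) w i * x i - c = \sum_(i <- s) w i * (x i - c).
  rewrite -[c]mul1r -{1}Hs mulr_suml -sumrB; apply: eq_bigr => i _; ring.
apply: wsum_pos => // [i iS|]; first by rewrite subr_gt0 Hx.
by rewrite Hs ltr01.
Qed.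

Lemma conv_le (R : realType) (I : eqType) (s : seq I) (w x : I -> R) c :
  (forall i, i \in s -> 0 <= w i) -> (forall i, i \in s -> x i <= c) ->
  \sum_(i <- s) w i = 1 -> \sum_(i <- s) w i * x i <= c.
Proof.
move=> Hw Hx Hs; rewrite -[c]mul1r -Hs mulr_suml.
by rewrite big_seq [X in _ <= X]big_seq; apply: ler_sum => i iS; rewrite ler_wpM2l ?Hw ?Hx.
Qed.

Lemma NP_ge0 (R : realType) d (g : seq (expv d)) (u : 'I_d -> R) k :
  in_NP g u -> 0 <= u k.
Proof.
move=> [s [_ Hw _ Hu]]; rewrite Hu big_seq; apply: sumr_ge0 => p ps.
by rewrite mulr_ge0 // (allP Hw p ps).
Qed.

Lemma NP_vec_up (R : realType) d (g : seq (expv d)) (u t : 'I_d -> R) :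
  in_NP g u -> (forall k, 0 <= t k) -> in_NP g (fun k => u k + t k).
Proof.
move=> Hu Ht.
suff H : forall n, in_NP g (fun k => u k + (if (k < n)%N then t k else 0)).
  have := H d; congr in_NP; apply: funext => k; by rewrite ltn_ord.
elim=> [|n IH].
  by move: Hu; congr in_NP; apply: funext => k; rewrite addr0.
case: (ltnP n d) => nd; last first.
  move: IH; congr in_NP; apply: funext => k.
  by rewrite (leq_trans (ltn_ord k) (leq_trans nd (leqnSn n))) (leq_trans (ltn_ord k) nd).
have := NP_up (Ordinal nd) IH (Ht (Ordinal nd)); congr in_NP; apply: funext => k.
rewrite -addrA; congr (_ + _).
have -> : (k == Ordinal nd) = (val k == n) by [].
case: (ltngtP k n) => h.
- by rewrite ltnS (ltnW h) addr0.
- by rewrite ltnS leqNgt h addr0.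
- by rewrite h ltnSn add0r; congr t; apply: val_inj.
Qed.

Lemma divides_refl d (a : expv d) : divides a a.
Proof. by apply/forallP => k. Qed.

Lemma divides_trans d (a b c : expv d) : divides a b -> divides b c -> divides a c.
Proof. move=> /forallP ab /forallP bc; apply/forallP => k; exact: leq_trans (ab k) (bc k). Qed.

Definition sumd d (e : expv d) := (\sum_(i < d) e i)%N.

Lemma sumd_lt d (b e : expv d) : divides b e -> b != e -> (sumd b < sumd e)%N.
Proof.
move=> /forallP be bne.
have [k bk] : exists k, b k != e k.
  apply/existsP; apply: contraNT bne; rewrite negb_exists => /forallP H.
  by apply/eqP/ffunP => k; apply/eqP; have := H k; rewrite negbK.
have ltk : (b k < e k)%N by rewrite ltn_neqAle bk be.
rewrite /sumd (bigD1 k) //= [X in (_ < X)%N](bigD1 k) //=.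
rewrite -addSn leq_add //; apply: leq_sum => i _; exact: be.
Qed.

Lemma mingens_sub d (g : seq (expv d)) m : m \in mingens g -> m \in g.
Proof. by rewrite mem_undup mem_filter => /andP[]. Qed.

Lemma mingens_ex d (g : seq (expv d)) e :
  in_ideal g e -> exists2 m, m \in mingens g & divides m e.
Proof.
move=> /hasP [b bg be].
suff [m mm mb] : exists2 m, m \in mingens g & divides m b.
  by exists m => //; exact: divides_trans mb be.
move: {e be} b bg; move=> b.
elim: {b}(sumd b).+1 {-2}b (ltnSn (sumd b)) => // n IH b bn bg.
case Hb: (has (fun b' => divides b' b && (b' != b)) g).
  move/hasP: Hb => [b' b'g /andP[b'b b'ne]].
  have [m mm mb'] := IH b' (leq_trans (sumd_lt b'b b'ne) bn) b'g.
  by exists m => //; exact: divides_trans mb' b'b.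
exists b; last exact: divides_refl.
by rewrite mem_undup mem_filter Hb bg.
Qed.

Lemma minmax_K (K : int -> Prop) (x y : int) : K x -> K y -> K (Num.min x y) /\ K (Num.max x y).
Proof. by move=> Kx Ky; split; case: leP. Qed.

Lemma V_K (R : realType) d (g : seq (expv d)) (r : R) i (K : int -> Prop) :
  K (head 0 [seq (v : ipt d) i | v <- Vset g r]) ->
  (forall v, v \in Vset g r -> K (v i)) ->
  K (minV g r i) /\ K (maxV g r i).
Proof.
move=> Kh Kv; rewrite /minV /maxV !big_seq; split;
  apply: (big_ind K) => // x y Kx Ky; by have [] := minmax_K Kx Ky.
Qed.

Lemma le_bigmin (s : seq int) x0 x : x \in s -> (\big[Num.min/x0]_(y <- s) y <= x).
Proof.
elim: s => // y s IH; rewrite inE big_cons => /orP[/eqP ->|xs].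
  by rewrite ge_min lexx.
by rewrite ge_min IH // orbT.
Qed.

Lemma ge_bigmax (s : seq int) x0 x : x \in s -> (x <= \big[Num.max/x0]_(y <- s) y).
Proof.
elim: s => // y s IH; rewrite inE big_cons => /orP[/eqP ->|xs].
  by rewrite le_max lexx.
by rewrite le_max IH // orbT.
Qed.

Lemma minV_le (R : realType) d (g : seq (expv d)) (r : R) i v :
  v \in Vset g r -> minV g r i <= v i.
Proof.
move=> vV; rewrite /minV -(big_map (fun v : ipt d => v i) xpredT id).
by apply: le_bigmin; apply: map_f.
Qed.

Lemma maxV_ge (R : realType) d (g : seq (expv d)) (r : R) i v :
  v \in Vset g r -> v i <= maxV g r i.
Proof.
move=> vV; rewrite /maxV -(big_map (fun v : ipt d => v i) xpredT id).
by apply: ge_bigmax; apply: map_f.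
Qed.

Lemma Vset_mem (R : realType) d (g : seq (expv d)) (r : R) m :
  m \in mingens g -> [ffun i => Num.ceil (r * ((m i)%:R))] \in Vset g r.
Proof. by move=> mm; apply: (map_f (fun a : expv d => [ffun i => Num.ceil (r * ((a i)%:R))])). Qed.

Lemma V_ge0 (R : realType) d (g : seq (expv d)) (r : R) i :
  0 <= r -> 0 <= minV g r i /\ 0 <= maxV g r i.
Proof.
move=> r0; have H : forall v, v \in Vset g r -> 0 <= v i.
  move=> v /mapP [a _ ->]; rewrite ffunE ceil_ge0.
  by apply: lt_le_trans (mulr_ge0 r0 (ler0n _ _)); rewrite ltrN10.
apply: (V_K (K := fun z => 0 <= z)) => //; case E: (Vset g r) => [|v s] //=.
by apply: H; rewrite E mem_head.
Qed.

Lemma V_r0 (R : realType) d (g : seq (expv d)) i :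
  minV g (0 : R) i = 0 /\ maxV g (0 : R) i = 0.
Proof.
have H : forall v, v \in Vset g (0 : R) -> v i = 0.
  by move=> v /mapP [a _ ->]; rewrite ffunE mul0r ceil0.
apply: (V_K (K := fun z => z = 0)) => //; case E: (Vset g 0) => [|v s] //=.
by apply: H; rewrite E mem_head.
Qed.

Lemma minV_mem (R : realType) d (g : seq (expv d)) (r : R) i :
  Vset g r != [::] -> exists2 v, v \in Vset g r & minV g r i = v i.
Proof.
move=> ne.
have : minV g r i \in [seq (v : ipt d) i | v <- Vset g r].
  apply: (proj1 (V_K (K := fun z => z \in [seq (v : ipt d) i | v <- Vset g r]) _ _)).
    by case: (Vset g r) ne => // v s _ /=; rewrite mem_head.
  by move=> v vV; apply: map_f.
by move=> /mapP [v vV ->]; exists v.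
Qed.

Lemma rNP_ge0 (R : realType) d (g : seq (expv d)) (r : R) v i :
  0 <= r -> in_rNP g r v -> 0 <= v i.
Proof. by move=> r0 [u [Hu ->]]; rewrite mulr_ge0 // (NP_ge0 _ Hu). Qed.

Lemma rNP_r0 (R : realType) d (g : seq (expv d)) v i :
  in_rNP g (0 : R) v -> v i = 0.
Proof. by move=> [u [_ ->]]; rewrite mul0r. Qed.

Lemma NP_pt (R : realType) d (g : seq (expv d)) e :
  in_ideal g e -> in_NP g (fun i => ((e i)%:R : R)).
Proof.
move=> He; exists [:: (1, e)]; split => /=; rewrite ?He ?ler01 //.
  by rewrite big_seq1.
by move=> i; rewrite big_seq1 mul1r.
Qed.

Lemma rNP_up (R : realType) d (g : seq (expv d)) (r : R) v v' :
  0 < r -> in_rNP g r v -> (forall k, v k <= v' k) -> in_rNP g r v'.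
Proof.
move=> r0 [u [Hu Hv]] le.
exists (fun k => u k + (v' k - v k) / r); split.
  apply: NP_vec_up => // k; rewrite divr_ge0 ?subr_ge0 ?le // ltW //.
move=> k; rewrite Hv; field; exact: lt0r_neq0.
Qed.

Lemma rNP_low (R : realType) d (g : seq (expv d)) (r : R) (a : ipt d) i :
  0 <= r -> in_rNP g r (fun k => (a k)%:~R) -> minV g r i <= a i.
Proof.
move=> r0 [u [[s [Hid Hw Hs Hu]] Hv]].
rewrite -ltzD1 -ltrBlDr -(ltr_int R) Hv Hu mulr_sumr.
have -> : \sum_(p <- s) r * (p.1 * (p.2 i)%:R) = \sum_(p <- s) p.1 * (r * (p.2 i)%:R).
  by apply: eq_bigr => p _; ring.
rewrite intrB; apply: conv_gt => // [p ps|p ps]; first exact: (allP Hw p ps).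
have [m mm me] := mingens_ex (allP Hid p ps).
have := minV_le i (Vset_mem r mm); rewrite ffunE => le1.
apply: le_lt_trans (_ : ((Num.ceil (r * (m i)%:R)) - 1)%:~R < _).
  by rewrite -intrB ler_int lerB.
apply: lt_le_trans (ceilB1_lt _) _.
by rewrite ler_wpM2l // ler_nat (forallP me i).
Qed.

Definition mmin d (g : seq (expv d)) (e : expv d) :=
  head e [seq m <- mingens g | divides m e].

Lemma mmin_prop d (g : seq (expv d)) e :
  in_ideal g e -> mmin g e \in mingens g /\ divides (mmin g e) e.
Proof.
move=> /mingens_ex [m mm me]; rewrite /mmin.
case E: [seq m <- mingens g | divides m e] => [|x t] /=.
  have : m \in [seq m <- mingens g | divides m e] by rewrite mem_filter me mm.
  by rewrite E.
have : x \in [seq m <- mingens g | divides m e] by rewrite E mem_head.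
by rewrite mem_filter => /andP[].
Qed.

Lemma rNP_red (R : realType) d (g : seq (expv d)) (r : R) (a : ipt d) (i : 'I_d) :
  0 <= r -> in_rNP g r (fun k => (a k)%:~R) -> maxV g r i < a i ->
  in_rNP g r (fun k => ((shift a i (-1)) k)%:~R).
Proof.
move=> r0 H lt.
have [r00|rpos] := eqVneq r 0.
  move: H lt; rewrite r00 => H; have := rNP_r0 i H; move/eqP; rewrite intr_eq0 => /eqP ->.
  by rewrite (proj2 (V_r0 _ _ _)) ltxx.
have rp : 0 < r by rewrite lt_def rpos r0.
move: H => [u [[s [Hid Hw Hs Hu]] Hv]].
pose newe (e : expv d) : expv d := [ffun j => if j == i then mmin g e j else e j].
pose u' k := \sum_(p <- s) p.1 * ((newe p.2 k)%:R : R).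
have Hu' : in_NP g u'.
  exists [seq (p.1, newe p.2) | p <- s]; split.
  - rewrite all_map; apply/allP => p ps /=.
    have [mm me] := mmin_prop (allP Hid p ps).
    apply/hasP; exists (mmin g p.2); first exact: mingens_sub.
    apply/forallP => j; rewrite ffunE; case: (j == i) => //; exact: (forallP me j).
  - by rewrite all_map; apply/allP => p ps /=; exact: (allP Hw p ps).
  - by rewrite big_map.
  - by move=> k; rewrite big_map.
apply: (rNP_up rp (v := fun k => r * u' k)); first by exists u'.
move=> k; rewrite ffunE /u'.
case: eqP => [ki|kne].
  have -> : k = i by apply: val_inj.
  rewrite mulr_sumr.
  have -> : \sum_(p <- s) r * (p.1 * (newe p.2 i)%:R) =
            \sum_(p <- s) p.1 * (r * (mmin g p.2 i)%:R).
    by apply: eq_bigr => p _; rewrite ffunE eqxx; ring.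
  apply: (@le_trans _ _ (maxV g r i)%:~R); last first.
    by rewrite ler_int lerBrDr lezD1.
  apply: conv_le => // [p ps|p ps]; first exact: (allP Hw p ps).
  have [mm _] := mmin_prop (allP Hid p ps).
  have := maxV_ge i (Vset_mem r mm); rewrite ffunE => le1.
  by apply: le_trans (ceil_ge _) _; rewrite ler_int.
rewrite Hv Hu le_eqVlt; apply/orP; left; apply/eqP; congr (_ * _).
apply: eq_bigr => p _; rewrite ffunE.
have -> : (k == i) = false by apply/eqP => ki; apply: kne; rewrite ki.
by [].
Qed.

Lemma PbP (R : realType) d (g : seq (expv d)) (r : R) (a : ipt d) :
  inrNPb g r a <-> in_rNP g r (fun i => (a i)%:~R).
Proof. by split => [/asboolP|H]; last apply/asboolP. Qed.

Lemma Pb_ge0 (R : realType) d (g : seq (expv d)) (r : R) (a : ipt d) i :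
  0 <= r -> inrNPb g r a -> 0 <= a i.
Proof. by move=> r0 /PbP H; rewrite -(ler_int R); exact: rNP_ge0 r0 H. Qed.

Lemma Pb_low (R : realType) d (g : seq (expv d)) (r : R) (a : ipt d) i :
  0 <= r -> inrNPb g r a -> minV g r i <= a i.
Proof. by move=> r0 /PbP H; exact: rNP_low. Qed.

Lemma Pb_upc (R : realType) d (g : seq (expv d)) (r : R) (c a : ipt d) :
  0 <= r -> inrNPb g r c -> (forall k, c k <= a k) -> (forall k, a k <= maxV g r k) ->
  inrNPb g r a.
Proof.
move=> r0 Pc ca amax.
have [r00|rpos] := eqVneq r 0.
  have -> : a = c; last by [].
  apply/ffunP => k; apply/eqP; rewrite eq_le ca andbT.
  move: Pc amax; rewrite r00 => /PbP Pc amax.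
  have := rNP_r0 k Pc; move/eqP; rewrite intr_eq0 => /eqP ->.
  by have := amax k; rewrite (proj2 (V_r0 _ _ _)).
have rp : 0 < r by rewrite lt_def rpos r0.
apply/PbP; apply: (rNP_up rp ((PbP g r c).1 Pc)) => k /=; by rewrite ler_int.
Qed.

Lemma absz_le (x y : int) : 0 <= x -> x <= y -> (absz x <= absz y)%N.
Proof. move=> x0 xy; lia. Qed.

Lemma Pb_box (R : realType) d (g : seq (expv d)) (r : R) (a : ipt d) :
  0 <= r -> inrNPb g r a ->
  exists2 a', inrNPb g r a' & (forall k, a' k <= a k) /\ in_hype g r a'.
Proof.
move=> r0.
elim: (sumd (toexp a)).+1 {-2}a (ltnSn (sumd (toexp a))) => // n IH {}a an Pa.
case Hx: [exists i, maxV g r i < a i].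
  move/existsP: Hx => [i lt].
  have a0 : 0 <= a i by have := Pb_ge0 i r0 Pa.
  have Pa' := rNP_red r0 ((PbP g r a).1 Pa) lt.
  have lt' : (sumd (toexp (shift a i (-1))) < sumd (toexp a))%N.
    have mx0 := proj2 (V_ge0 g i r0).
    apply: sumd_lt.
      apply/forallP => k; rewrite !ffunE; case: eqP => [/val_inj ->|_] //.
      lia.
    apply/eqP => /ffunP /(_ i); rewrite !ffunE eqxx; lia.
  have [a' Pa'' [a'le hyp]] := IH _ (leq_trans lt' an) ((PbP g r _).2 Pa').
  exists a' => //; split => // k; apply: le_trans (a'le k) _.
  by rewrite ffunE; case: eqP => _ //; rewrite lerBlDr lerDl.
exists a => //; split => // ; apply/forallP => k; rewrite Pb_low //=.
by move/negbT: Hx; rewrite negb_exists => /forallP /(_ k); rewrite -leNgt.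
Qed.

Lemma divides_toexp d (b c : ipt d) :
  (forall k, 0 <= b k) -> (forall k, b k <= c k) -> divides (toexp b) (toexp c).
Proof. by move=> b0 bc; apply/forallP => k; rewrite !ffunE absz_le. Qed.

Lemma emit_has (R : realType) d (g : seq (expv d)) (r : R) (b c : ipt d) :
  0 <= r -> inrNPb g r b -> (forall k, b k <= c k) ->
  has (fun o => divides o (toexp c)) (emit g r b).
Proof.
move=> r0 Pb bc; rewrite /emit Pb /= orbF; apply: divides_toexp => // k.
exact: Pb_ge0 r0 Pb.
Qed.

Lemma loopB (R : realType) d (g : seq (expv d)) (r : R) (c : ipt d) :
  0 <= r -> forall n (a b : ipt d), inrNPb g r b -> (forall k, b k <= c k) -> (forall k, a k <= b k) ->
  has (fun o => divides o (toexp c)) (loop g r n a b).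
Proof.
move=> r0; elim=> [|n IH] a b Pb bc ab /=; first exact: emit_has.
case: (in_hype g r a); last exact: emit_has.
case Pa: (inrNPb g r a).
  apply: IH => // k; first exact: le_trans (ab k) (bc k).
  by rewrite ffunE; case: eqP => _ //; rewrite lerBlDr lerDl.
by rewrite has_cat emit_has.
Qed.

Lemma shift_ne d (a : ipt d) (j k : 'I_d) x : k != j -> shift a (val j) x k = a k.
Proof. by move=> kj; rewrite ffunE; case: eqP => // /val_inj kjE; rewrite kjE eqxx in kj. Qed.

Lemma shift_eq d (a : ipt d) (j : 'I_d) x : shift a (val j) x j = a j + x.
Proof. by rewrite ffunE eqxx. Qed.

Lemma loopA (R : realType) d (g : seq (expv d)) (r : R) (c : ipt d) (j1 j2 : 'I_d) :
  val j1 = d.-2 -> val j2 = d.-1 -> j1 != j2 ->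
  0 <= r -> inrNPb g r c -> in_hype g r c ->
  forall n (a b : ipt d), (forall k, k != j1 -> k != j2 -> a k = c k) ->
  minV g r j1 <= a j1 <= c j1 -> c j2 <= a j2 <= maxV g r j2 ->
  (c j1 - a j1) + (a j2 - c j2) < n%:Z ->
  has (fun o => divides o (toexp c)) (loop g r n a b).
Proof.
move=> hj1 hj2 jne r0 Pc hc.
elim=> [|n IH] a b aeq /andP[a1l a1u] /andP[a2l a2u] mes; first lia.
have ahyp : in_hype g r a.
  apply/forallP => k; have /andP[ck1 ck2] := forallP hc k.
  case: (eqVneq k j1) => [->|kj1]; first by rewrite a1l (le_trans a1u) // (andP (forallP hc j1)).2.
  case: (eqVneq k j2) => [->|kj2]; first by rewrite a2u andbT (le_trans _ a2l) // (andP (forallP hc j2)).1.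
  by rewrite aeq // ck1 ck2.
rewrite /= ahyp -hj1 -hj2.
case Pa: (inrNPb g r a).
  case: (eqVneq (a j2) (c j2)) => [e2|n2].
    apply: loopB => // k.
      case: (eqVneq k j1) => [->|kj1] //; case: (eqVneq k j2) => [->|kj2]; first by rewrite e2.
      by rewrite aeq.
    by rewrite ffunE; case: eqP => _ //; rewrite lerBlDr lerDl.
  have j21 : j1 != j2 by [].
  have j12 : j2 != j1 by rewrite eq_sym.
  apply: IH.
  - by move=> k k1 k2; rewrite shift_ne // aeq.
  - by rewrite shift_ne // a1l a1u.
  - rewrite ?shift_eq ?shift_ne //; lia.
  - rewrite ?shift_eq ?shift_ne //; lia.
case: (eqVneq (a j1) (c j1)) => [e1|n1].
  suff : inrNPb g r a by rewrite Pa.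
  apply: (Pb_upc r0 Pc).
    move=> k; case: (eqVneq k j1) => [->|kj1]; first by rewrite e1.
    case: (eqVneq k j2) => [->|kj2] //; by rewrite aeq.
  by move=> k; have /andP[] := forallP ahyp k.
have j12 : j2 != j1 by rewrite eq_sym.
rewrite has_cat; apply/orP; right; apply: IH.
- by move=> k k1 k2; rewrite shift_ne // aeq.
- rewrite ?shift_eq ?shift_ne //; lia.
- rewrite ?shift_eq ?shift_ne //; lia.
- rewrite ?shift_eq ?shift_ne //; lia.
Qed.

Lemma loop_out (R : realType) d (g : seq (expv d)) (r : R) :
  forall n (a b : ipt d) o, o \in loop g r n a b -> exists2 p, inrNPb g r p & o = toexp p.
Proof.
have Hemit : forall (b : ipt d) o, o \in emit g r b -> exists2 p, inrNPb g r p & o = toexp p.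
  by move=> b o; rewrite /emit; case Pb: (inrNPb g r b) => //; rewrite inE => /eqP ->; exists b.
elim=> [|n IH] a b o /=; first exact: Hemit.
case: (in_hype g r a); last exact: Hemit.
case: (inrNPb g r a); first exact: IH.
by rewrite mem_cat => /orP[]; [exact: Hemit | exact: IH].
Qed.

Lemma P_intclos (R : realType) d (g : seq (expv d)) (r : R) (p : ipt d) :
  0 <= r -> inrNPb g r p -> in_intclos g r (toexp p).
Proof.
move=> r0 Pp; exists (toexp p); split; last exact: divides_refl.
have := (PbP g r p).1 Pp; congr in_rNP; apply: funext => i.
by rewrite ffunE natr_absz ger0_norm //; exact: Pb_ge0 r0 Pp.
Qed.

Lemma intclos_P (R : realType) d (g : seq (expv d)) (r : R) (a : expv d) :
  in_rNP g r (fun i => (a i)%:R) -> inrNPb g r [ffun i => (a i)%:Z].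
Proof.
move=> H; apply/PbP; move: H; congr in_rNP; apply: funext => i; by rewrite ffunE.
Qed.

Lemma P_ceil (R : realType) d (g : seq (expv d)) (r : R) m :
  0 <= r -> m \in g -> inrNPb g r [ffun i => Num.ceil (r * (m i)%:R)].
Proof.
move=> r0 mg.
have mI : in_ideal g m by apply/hasP; exists m => //; exact: divides_refl.
have [r00|rpos] := eqVneq r 0.
  apply/PbP; exists (fun i => ((m i)%:R : R)); split; first exact: NP_pt.
  by move=> i; rewrite ffunE r00 !mul0r ceil0.
have rp : 0 < r by rewrite lt_def rpos r0.
apply/PbP; apply: (rNP_up rp (v := fun i => r * (m i)%:R)).
  by exists (fun i => ((m i)%:R : R)); split => //; exact: NP_pt.
by move=> k; rewrite ffunE ceil_ge.
Qed.

Lemma mingens_nil d (g : seq (expv d)) : g != [::] -> mingens g != [::].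
Proof.
case: g => // e g' _.
have eI : in_ideal (e :: g') e by apply/hasP; exists e; [exact: mem_head | exact: divides_refl].
have [m mm _] := mingens_ex eI.
by apply/eqP => E; rewrite E in mm.
Qed.

Definition rho d (j1 j2 : 'I_d) (o1 o2 : expv d) : bool :=
  (o1 j1 < o2 j1)%N && (o2 j2 < o1 j2)%N.

Lemma rho_trans d (j1 j2 : 'I_d) : transitive (rho j1 j2).
Proof.
move=> y x z /andP[h1 h2] /andP[h3 h4]; apply/andP; split; [exact: ltn_trans h1 h3 | exact: ltn_trans h4 h2].
Qed.

Lemma loop_E (R : realType) d (g : seq (expv d)) (r : R) (j1 j2 : 'I_d) :
  val j1 = d.-2 -> val j2 = d.-1 -> j1 != j2 ->
  forall n (a b : ipt d) o, o \in loop g r n a b ->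
  exists p, [/\ inrNPb g r p, o = toexp p &
     (p = b \/ (a j1 <= p j1 /\ p j2 <= a j2))].
Proof.
move=> hj1 hj2 jne.
have j12 : j2 != j1 by rewrite eq_sym.
have Hemit : forall (a b : ipt d) o, o \in emit g r b -> exists p, [/\ inrNPb g r p, o = toexp p &
     (p = b \/ (a j1 <= p j1 /\ p j2 <= a j2))].
  move=> a b o; rewrite /emit; case Pb: (inrNPb g r b) => //; rewrite inE => /eqP ->.
  by exists b; split => //; left.
elim=> [|n IH] a b o /=; first exact: Hemit.
case: (in_hype g r a); last exact: Hemit.
rewrite -hj1 -hj2.
case Pa: (inrNPb g r a).
  move=> /IH [p [Pp -> H]]; exists p; split => //; right.
  case: H => [->|[h1 h2]]; first by [].
  by move: h1 h2; rewrite shift_eq shift_ne // => h1 h2; split => //; lia.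
rewrite mem_cat => /orP[/(Hemit a)//|/IH [p [Pp -> H]]]; exists p; split => //; right.
case: H => [pa|[h1 h2]]; first by rewrite pa Pa in Pp.
by move: h1 h2; rewrite shift_eq shift_ne // => h1 h2; split => //; lia.
Qed.

Lemma loop_sorted (R : realType) d (g : seq (expv d)) (r : R) (j1 j2 : 'I_d) :
  val j1 = d.-2 -> val j2 = d.-1 -> j1 != j2 -> 0 <= r ->
  forall n (a b : ipt d), (inrNPb g r b -> b = a \/ (b j1 = a j1 /\ b j2 = a j2 + 1)) ->
  sorted (rho j1 j2) (loop g r n a b).
Proof.
move=> hj1 hj2 jne r0.
have j12 : j2 != j1 by rewrite eq_sym.
have Hemit : forall b : ipt d, sorted (rho j1 j2) (emit g r b).
  by move=> b; rewrite /emit; case: (inrNPb g r b).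
elim=> [|n IH] a b Ib /=; first exact: Hemit.
case: (in_hype g r a); last exact: Hemit.
case Pa: (inrNPb g r a).
  rewrite -hj2; apply: IH => _; right; rewrite shift_ne // shift_eq; split => //; lia.
rewrite /emit; case Pb: (inrNPb g r b) => /=; last first.
  by apply: IH => Pa'; rewrite Pa' in Pa.
have [ba|[b1 b2]] := Ib Pb; first by rewrite ba Pa in Pb.
rewrite (path_sortedE (@rho_trans _ j1 j2)); apply/andP; split; last first.
  by apply: IH => Pa'; rewrite Pa' in Pa.
apply/allP => o; rewrite -hj1 => /(loop_E hj1 hj2 jne) [p [Pp -> H]].
case: H => [pa|[h1 h2]]; first by rewrite pa Pa in Pp.
move: h1 h2; rewrite shift_eq shift_ne // => h1 h2.
have p1 := Pb_ge0 j1 r0 Pp; have p2 := Pb_ge0 j2 r0 Pp.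
have q1 := Pb_ge0 j1 r0 Pb; have q2 := Pb_ge0 j2 r0 Pb.
rewrite /rho !ffunE; apply/andP; split; lia.
Qed.

Lemma pairwise_mem (T : eqType) (rel : rel T) (s : seq T) x y :
  pairwise rel s -> x \in s -> y \in s -> x != y -> rel x y || rel y x.
Proof.
elim: s => // z s IH /= /andP[/allP Hz Hs]; rewrite !inE.
move=> /orP[/eqP ->|xs] /orP[/eqP ->|ys] ne.
- by rewrite eqxx in ne.
- by rewrite Hz.
- by rewrite Hz // orbT.
- exact: IH.
Qed.

Lemma sorted_anti d (j1 j2 : 'I_d) (s : seq (expv d)) t e :
  sorted (rho j1 j2) s -> t \in s -> e \in s -> t != e -> divides t e -> False.
Proof.
rewrite (sorted_pairwise (@rho_trans _ j1 j2)) => Hp ts es ne /forallP dv.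
have := pairwise_mem Hp ts es ne; rewrite /rho.
have := dv j1; have := dv j2; lia.
Qed.

Definition spt (R : realType) d (g : seq (expv d)) (r : R) (j1 j2 : 'I_d) (c : ipt d) : ipt d :=
  [ffun k => if k == j1 then minV g r j1 else if k == j2 then maxV g r j2 else c k].

Lemma maxV_Bnd (R : realType) d (g : seq (expv d)) (r : R) i :
  0 <= r -> maxV g r i <= (Bnd g r)%:Z.
Proof.
move=> r0; have := proj2 (V_ge0 g i r0) => m0.
have : (absz (maxV g r i) <= Bnd g r)%N by rewrite /Bnd; exact: (@leq_bigmax _ (fun k : 'I_d => absz (maxV g r k)) i).
lia.
Qed.

Lemma start_mem (R : realType) d (g : seq (expv d)) (r : R) (j1 j2 : 'I_d) (c : ipt d) :
  val j1 = d.-2 -> val j2 = d.-1 -> j1 != j2 -> 0 <= r -> in_hype g r c ->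
  spt g r j1 j2 c \in startpoints g r.
Proof.
move=> hj1 hj2 jne r0 hc.
have hc1 := forallP hc j1; have hc2 := forallP hc j2.
have shyp : in_hype g r (spt g r j1 j2 c).
  apply/forallP => k; rewrite ffunE.
  case: (eqVneq k j1) => [->|kj1].
    by rewrite lexx /=; case/andP: hc1 => h1 h2; exact: le_trans h1 h2.
  case: (eqVneq k j2) => [->|kj2]; last exact: forallP hc k.
  by rewrite lexx andbT; case/andP: hc2 => h1 h2; exact: le_trans h1 h2.
rewrite mem_filter; apply/andP; split.
  rewrite shyp /=; apply/andP; split; apply/forallP => i; apply/implyP => /eqP hi;
    rewrite ffunE.
    have -> : i = j1 by apply: ord_inj; rewrite hi hj1.
    by rewrite eqxx.
  have -> : i = j2 by apply: ord_inj; rewrite hi hj2.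
  by rewrite eqxx (negbTE (_ : j2 != j1)) // eq_sym.
have s0 : forall k, 0 <= spt g r j1 j2 c k.
  move=> k; apply: le_trans (proj1 (V_ge0 g k r0)) _.
  by have /andP[] := forallP shyp k.
have sB : forall k, (absz (spt g r j1 j2 c k) < (Bnd g r).+1)%N.
  move=> k; have := maxV_Bnd g k r0; have := s0 k.
  have /andP[_ h] := forallP shyp k; lia.
have -> : spt g r j1 j2 c =
   (fun f : {ffun 'I_d -> 'I_(Bnd g r).+1} => [ffun i => ((f i : nat)%:Z)])
     [ffun i => Ordinal (sB i)].
  by apply/ffunP => k; rewrite [LHS]ffunE ffunE /= ffunE gez0_abs //; have := s0 k; rewrite ffunE.
exact: image_f.
Qed.

Lemma start_eq (R : realType) d (g : seq (expv d)) (r : R) (s1 s2 : ipt d) :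
  d = 2%N -> s1 \in startpoints g r -> s2 \in startpoints g r -> s1 = s2.
Proof.
move=> d2; rewrite !mem_filter => /andP[/and3P[_ /forallP a1 /forallP b1] _] /andP[/and3P[_ /forallP a2 /forallP b2] _].
apply/ffunP => k; have : (val k == d.-2) || (val k == d.-1).
  by case: k => v hv /=; clear -d2 hv; subst d; case: v hv => [|[|]].
case/orP => h.
  by move: (implyP (a1 k) h) (implyP (a2 k) h) => /eqP -> /eqP ->.
by move: (implyP (b1 k) h) (implyP (b2 k) h) => /eqP -> /eqP ->.
Qed.

Unset Implicit Arguments.
Set Strict Implicit.

Theorem proposition4p9 (R : realType) (d : nat) (g : seq (expv d)) (r : R) :
  (1 <= d)%N -> g != [::] -> 0 <= r ->
  generates (staircase g r) (in_intclos g r) /\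
  ((d <= 2)%N -> minimal_generates (staircase g r) (in_intclos g r)).
Proof.
move=> d1 gne r0.
have J_up : forall o c, in_intclos g r o -> divides o c -> in_intclos g r c.
  by move=> o c [a [Ha ao]] oc; exists a; split => //; exact: divides_trans ao oc.
have mgne := mingens_nil gne.
have Vne : Vset g r != [::] by rewrite /Vset; case: (mingens g) mgne.
case: (eqVneq d 1) => [d1e | dn1].
  subst d.
  pose p : ipt 1 := [ffun i => minV g r i].
  have Pp : inrNPb g r p.
    have [v vV e] := minV_mem ord0 Vne.
    have -> : p = v by apply/ffunP => i; rewrite ffunE (ord1 i) e.
    by move: vV => /mapP [m mm ->]; apply: P_ceil => //; exact: mingens_sub.
  have oE : [ffun i => absz (minV g r i)] = toexp p by apply/ffunP => i; rewrite !ffunE.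
  have Jo : in_intclos g r (toexp p) by exact: P_intclos.
  have gen : generates (staircase g r) (in_intclos g r).
    move=> c; rewrite /staircase /= oE orbF; split.
      move=> [a [Ha ac]]; apply/forallP => i; rewrite !ffunE.
      have := Pb_low i r0 (intclos_P Ha); rewrite ffunE => h.
      have := proj1 (V_ge0 g i r0); have := forallP ac i; lia.
    by move=> H; exact: J_up Jo H.
  split => // _; split => // s; rewrite /staircase /= oE inE => /eqP -> H.
  by have := (H (toexp p)).1 Jo; rewrite /= eqxx.
have d2 : (2 <= d)%N by case: d d1 dn1 {g gne mgne Vne J_up} => [|[|]].
have lt1 : (d.-2 < d)%N by lia.
have lt2 : (d.-1 < d)%N by lia.
pose j1 : 'I_d := Ordinal lt1.
pose j2 : 'I_d := Ordinal lt2.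
have hj1 : val j1 = d.-2 by [].
have hj2 : val j2 = d.-1 by [].
have jne : j1 != j2 by apply/eqP => /(congr1 val) /=; lia.
have SE : staircase g r = flatten [seq loop g r (loop_fuel g r) a a | a <- startpoints g r].
  by rewrite /staircase (negbTE dn1).
have Sout : forall o, o \in staircase g r -> in_intclos g r o.
  rewrite SE => o /flatten_mapP [s _ os].
  by have [p Pp ->] := loop_out os; exact: P_intclos.
have gen : generates (staircase g r) (in_intclos g r).
  move=> c; split; last first.
    by move=> /hasP [o os oc]; exact: J_up (Sout o os) oc.
  move=> [a [Ha ac]].
  have [a' Pa' [a'le hyp]] := Pb_box r0 (intclos_P Ha).
  have h1 := forallP hyp j1; have h2 := forallP hyp j2.
  have m1 := V_ge0 g j1 r0; have m2 := V_ge0 g j2 r0.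
  have B1 := maxV_Bnd g j1 r0; have B2 := maxV_Bnd g j2 r0.
  have j21 : j2 != j1 by rewrite eq_sym.
  have A1 : forall k, k != j1 -> k != j2 -> spt g r j1 j2 a' k = a' k.
    by move=> k k1 k2; rewrite ffunE (negbTE k1) (negbTE k2).
  have A2 : minV g r j1 <= spt g r j1 j2 a' j1 <= a' j1.
    by rewrite ffunE eqxx lexx; case/andP: h1.
  have A3 : a' j2 <= spt g r j1 j2 a' j2 <= maxV g r j2.
    by rewrite ffunE (negbTE j21) eqxx lexx andbT; case/andP: h2.
  have A4 : (a' j1 - spt g r j1 j2 a' j1) + (spt g r j1 j2 a' j2 - a' j2) < (loop_fuel g r)%:Z.
    rewrite !ffunE eqxx (negbTE j21) eqxx /loop_fuel; lia.
  have := @loopA R d g r a' j1 j2 hj1 hj2 jne r0 Pa' hyp (loop_fuel g r) _ (spt g r j1 j2 a') A1 A2 A3 A4.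
  move=> /hasP [o oin odv]; rewrite SE; apply/hasP; exists o.
    by apply/flatten_mapP; exists (spt g r j1 j2 a') => //; exact: start_mem.
  apply: divides_trans odv _; apply/forallP => k; rewrite ffunE.
  have := a'le k; have := Pb_ge0 k r0 Pa'; have := forallP ac k; rewrite ffunE; lia.
split => // dle; split => // e es H.
have d2e : d = 2%N by lia.
have [t] := hasP ((H e).1 (Sout e es)).
rewrite mem_filter => /andP[te ts] tdiv.
move: ts es; rewrite SE => /flatten_mapP [s1 s1m t1] /flatten_mapP [s2 s2m e2].
rewrite -(start_eq d2e s1m s2m) in e2.
have so : sorted (rho j1 j2) (loop g r (loop_fuel g r) s1 s1).
  by apply: loop_sorted => // _; left.
exact: sorted_anti so t1 e2 te tdiv.
Qed.
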